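(* For every integer $n\ge 1$, let \[ R_n:=\frac{\pi}{4}-\sum_{m=0}^{n-1}\frac{(-1)^m}{2m+1}=\sum_{m=n}^{\infty}\frac{(-1)^m}{2m+1}. \] Then \begin{align*} R_{n}=\frac{(-1)^{n}(2n-1)!}{16}\sum_{k=0}^{\infty}\frac{1}{16^{k}}\Bigg[&\frac{8}{(8k+1)_{2n}}-\frac{4}{(8k+3)_{2n}}-\frac{4}{(8k+4)_{2n}} \\ &-\frac{2}{(8k+5)_{2n}}+\frac{1}{(8k+7)_{2n}}+\frac{1}{(8k+8)_{2n}}\Bigg]. \end{align*}
   Context: For a real number $a$ and integer $m\ge 0$, $(a)_m$ denotes the rising factorial (Pochhammer symbol): $(a)_0:=1$ and $(a)_m:=a(a+1)\cdots(a+m-1)=\Gamma(a+m)/\Gamma(a)$. Thus $(8k+q)_{2n}$ is a product of $2n$ consecutive factors starting at $8k+q$. *)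

(* Defs.v *)
From Stdlib Require Import Reals.
From Coquelicot Require Import Coquelicot.
Open Scope R_scope.

Fixpoint poch (a : R) (m : nat) : R :=
  match m with
  | O => 1
  | S m' => poch a m' * (a + INR m')
  end.

Definition Rtail (n : nat) : R :=
  PI / 4 - sum_f_R0 (fun m => (-1) ^ m / (2 * INR m + 1)) (n - 1).

Definition term (n k : nat) : R :=
  / 16 ^ k *
  ( 8 / poch (8 * INR k + 1) (2 * n)
  - 4 / poch (8 * INR k + 3) (2 * n)
  - 4 / poch (8 * INR k + 4) (2 * n)
  - 2 / poch (8 * INR k + 5) (2 * n)
  + 1 / poch (8 * INR k + 7) (2 * n)
  + 1 / poch (8 * INR k + 8) (2 * n)).

(* Main.v *)
Require Import Defs.
From Stdlib Require Import Reals Lra Lia.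
From Coquelicot Require Import Coquelicot.
Open Scope R_scope.

Lemma poch_S_l a m : poch a (S m) = a * poch (a+1) m.
Proof.
  induction m as [|m IH].
  - simpl. ring.
  - change (poch a (S (S m))) with (poch a (S m) * (a + INR (S m))).
    rewrite IH. simpl (poch (a+1) (S m)). rewrite S_INR. ring.
Qed.

Lemma poch_pos a m : 0 < a -> 0 < poch a m.
Proof. intros Ha; induction m; simpl. lra. apply Rmult_lt_0_compat; auto.
  pose proof (pos_INR m); lra. Qed.

Lemma poch_ge_fact a m : 1 <= a -> INR (Factorial.fact m) <= poch a m.
Proof. intros Ha; induction m; simpl poch. simpl; lra.
  rewrite fact_simpl, mult_INR, S_INR.
  pose proof (pos_INR m). pose proof (INR_fact_lt_0 m).
  rewrite Rmult_comm. apply Rmult_le_compat; lra.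
Qed.

Definition J (n : nat) (a : R) := INR (Factorial.fact (2*n-1)) / poch a (2*n).

Lemma J_S n a b d : (1 <= n)%nat -> 0 < a -> b = a + 1 -> d = a + 2 ->
  J (S n) a = J n a - 2 * J n b + J n d.
Proof.
  intros Hn Ha -> ->. unfold J.
  set (m := (2*n)%nat).
  replace (2 * S n - 1)%nat with (S (S (m-1))) by (unfold m; lia).
  replace (2 * S n)%nat with (S (S m)) by (unfold m; lia).
  rewrite (fact_simpl (S (m-1))), (fact_simpl (m-1)), !mult_INR.
  replace (S (m-1)) with m by (unfold m; lia).
  replace (2*n-1)%nat with (m-1)%nat by (unfold m; lia).
  change (poch a (S (S m))) with (poch a m * (a + INR m) * (a + INR (S m))). rewrite !S_INR.
  assert (HN : 0 < INR m) by (apply lt_0_INR; unfold m; lia).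
  set (N := INR m). set (c := INR (Factorial.fact (m-1))). set (q := poch a m).
  assert (Hq : 0 < q) by (apply poch_pos; lra).
  assert (H1 : poch (a+1) m = q * (a+N) / a).
  { pose proof (poch_S_l a m) as E. simpl in E. fold q N in E.
    apply (Rmult_eq_reg_l a); [|lra]. rewrite <- E. field. lra. }
  assert (H2 : poch (a+2) m = q * (a+N) * (a+N+1) / (a * (a+1))).
  { pose proof (poch_S_l (a+1) m) as E. simpl in E. replace (a+1+1) with (a+2) in E by ring.
    fold N in E. rewrite H1 in E.
    apply (Rmult_eq_reg_l (a+1)); [|lra]. rewrite <- E. field. lra. }
  rewrite H1, H2. change (0 < N) in HN. field. repeat split; intro; lra.
Qed.

Definition g (n k : nat) := / 16 ^ k * (J n (8 * INR k + 1) - J n (8 * INR k + 2)).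

Lemma term_J n k : INR (Factorial.fact (2*n-1)) * term n k =
  / 16 ^ k * (8 * J n (8*INR k+1) - 4 * J n (8*INR k+3) - 4 * J n (8*INR k+4)
   - 2 * J n (8*INR k+5) + J n (8*INR k+7) + J n (8*INR k+8)).
Proof. unfold term, J, Rdiv. ring. Qed.

Lemma tel n k : (1 <= n)%nat ->
  INR (Factorial.fact (2*n-1)) * term n k + INR (Factorial.fact (2*S n-1)) * term (S n) k
  = 16 * (g n k - g n (S k)).
Proof.
  intros Hn. rewrite !term_J.
  pose proof (pos_INR k) as Hk.
  rewrite (J_S n (8*INR k+1) (8*INR k+2) (8*INR k+3)) by (auto; lra).
  rewrite (J_S n (8*INR k+3) (8*INR k+4) (8*INR k+5)) by (auto; lra).
  rewrite (J_S n (8*INR k+4) (8*INR k+5) (8*INR k+6)) by (auto; lra).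
  rewrite (J_S n (8*INR k+5) (8*INR k+6) (8*INR k+7)) by (auto; lra).
  rewrite (J_S n (8*INR k+7) (8*INR k+8) (8*INR k+9)) by (auto; lra).
  rewrite (J_S n (8*INR k+8) (8*INR k+9) (8*INR k+10)) by (auto; lra).
  unfold g. rewrite S_INR.
  replace (8*(INR k+1)+1) with (8*INR k+9) by ring.
  replace (8*(INR k+1)+2) with (8*INR k+10) by ring.
  change (16 ^ S k) with (16 * 16 ^ k).
  assert (0 < 16 ^ k) by (apply pow_lt; lra).
  field. lra.
Qed.

Lemma fact_2n n : (1 <= n)%nat ->
  INR (Factorial.fact (2*n)) = INR (2*n) * INR (Factorial.fact (2*n-1)).
Proof. intros Hn. replace (2*n)%nat with (S (2*n-1)) at 1 by lia.
  rewrite fact_simpl, mult_INR. f_equal. f_equal. lia. Qed.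

Lemma J_bound n b : (1 <= n)%nat -> 1 <= b -> 0 < J n b <= / INR (2*n).
Proof.
  intros Hn Hb. unfold J.
  pose proof (INR_fact_lt_0 (2*n-1)).
  assert (H2 : 0 < INR (2*n)) by (apply lt_0_INR; lia).
  pose proof (poch_ge_fact b (2*n) Hb) as Hp. rewrite fact_2n in Hp by auto.
  split.
  - apply Rdiv_lt_0_compat; auto. apply poch_pos; lra.
  - unfold Rdiv. apply (Rmult_le_reg_r (poch b (2*n))). apply poch_pos; lra.
    rewrite Rmult_assoc, Rinv_l by (apply Rgt_not_eq, poch_pos; lra).
    apply (Rmult_le_reg_l (INR (2*n))); auto.
    rewrite Rmult_1_r, <- (Rmult_assoc (INR (2*n)) (/ _)), Rinv_r, Rmult_1_l by lra. lra.
Qed.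

Lemma term_bound n k : (1 <= n)%nat ->
  Rabs (INR (Factorial.fact (2*n-1)) * term n k) <= 20 * / INR (2*n) * (/16) ^ k.
Proof.
  intros Hn. rewrite term_J, Rabs_mult, pow_inv.
  assert (Hu : 0 < / 16 ^ k) by (apply Rinv_0_lt_compat, pow_lt; lra).
  rewrite (Rabs_right (/ 16 ^ k)) by lra.
  rewrite (Rmult_comm (20 * _)). apply Rmult_le_compat_l; [lra|].
  pose proof (pos_INR k).
  pose proof (J_bound n (8*INR k+1) Hn ltac:(lra)).
  pose proof (J_bound n (8*INR k+3) Hn ltac:(lra)).
  pose proof (J_bound n (8*INR k+4) Hn ltac:(lra)).
  pose proof (J_bound n (8*INR k+5) Hn ltac:(lra)).
  pose proof (J_bound n (8*INR k+7) Hn ltac:(lra)).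
  pose proof (J_bound n (8*INR k+8) Hn ltac:(lra)).
  apply Rabs_le. lra.
Qed.

Lemma ex_geom_scal C : ex_series (fun k => C * (/16) ^ k).
Proof.
  exists (C * / (1 - /16)).
  apply (is_series_scal_l C (fun k => (/16)^k)).
  apply is_series_geom. rewrite Rabs_right; lra.
Qed.

Lemma ex_term n : (1 <= n)%nat -> ex_series (term n).
Proof.
  intros Hn.
  assert (Hc : 0 < INR (Factorial.fact (2*n-1))) by apply INR_fact_lt_0.
  assert (E : ex_series (fun k => INR (Factorial.fact (2*n-1)) * term n k)).
  { apply (@ex_series_le R_AbsRing R_CompleteNormedModule _ (fun k => 20 * / INR (2*n) * (/16) ^ k)).
    - intros k. apply term_bound; auto.
    - apply ex_geom_scal. }
  apply (ex_series_scal_l (/ INR (Factorial.fact (2*n-1)))) in E.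
  eapply ex_series_ext; [|exact E]. intros k. simpl. unfold scal; simpl.
  unfold mult; simpl. field. apply Rgt_not_eq; exact Hc.
Qed.

Definition cn (n : nat) := INR (Factorial.fact (2*n-1)).
Definition Sn (n : nat) := Series (term n).

Lemma cS_bound n : (1 <= n)%nat -> Rabs (cn n * Sn n) <= 22 * / INR (2*n).
Proof.
  intros Hn. unfold Sn, cn. rewrite <- Series_scal_l.
  set (a := fun k => INR (Factorial.fact (2*n-1)) * term n k).
  set (b := fun k => 20 * / INR (2*n) * (/16) ^ k).
  assert (Hb : ex_series b) by apply ex_geom_scal.
  assert (Hab : ex_series (fun k => Rabs (a k))).
  { apply (@ex_series_le R_AbsRing R_CompleteNormedModule _ b); auto.
    intros k. unfold norm; simpl. unfold abs; simpl. rewrite Rabs_Rabsolu.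
    apply term_bound; auto. }
  eapply Rle_trans. apply Series_Rabs; auto.
  eapply Rle_trans. apply (Series_le _ b); [|exact Hb].
  intros k; split. apply Rabs_pos. apply term_bound; auto.
  assert (E : Series b = 20 * / INR (2*n) * / (1 - /16)).
  { apply is_series_unique. apply (is_series_scal_l (20 * / INR (2*n)) (fun k => (/16)^k)).
    apply is_series_geom. rewrite Rabs_right; lra. }
  rewrite E.
  assert (0 < / INR (2*n)) by (apply Rinv_0_lt_compat, lt_0_INR; lia).
  replace (/ (1 - /16)) with (16/15) by field. lra.
Qed.

Lemma tele (u : nat -> R) : is_lim_seq u 0 -> is_series (fun k => u k - u (S k)) (u 0%nat).
Proof.
  intros H. apply is_series_Reals.
  assert (Hs : forall N, sum_f_R0 (fun k => u k - u (S k)) N = u 0%nat - u (S N)).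
  { induction N; simpl. ring. rewrite IHN. ring. }
  apply is_lim_seq_incr_1 in H.
  assert (H2 : is_lim_seq (fun N => u 0%nat - u (S N)) (u 0%nat - 0)).
  { apply is_lim_seq_minus'; auto. apply is_lim_seq_const. }
  rewrite Rminus_0_r in H2.
  apply is_lim_seq_Reals in H2.
  intros eps Heps. destruct (H2 eps Heps) as [N HN]. exists N. intros m Hm.
  rewrite Hs. apply HN; auto.
Qed.

Lemma poch1 m : poch 1 m = INR (Factorial.fact m).
Proof. induction m; simpl poch. reflexivity. rewrite IHm, fact_simpl, mult_INR, S_INR. ring. Qed.

Lemma poch2 m : poch 2 m = INR (Factorial.fact (S m)).
Proof. rewrite <- poch1, poch_S_l. replace (1+1) with 2 by ring. ring. Qed.

Lemma g_lim n : (1 <= n)%nat -> is_lim_seq (g n) 0.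
Proof.
  intros Hn.
  assert (Hg : is_lim_seq (fun k => 2 * (/16)^k) 0).
  { replace (Finite 0) with (Rbar_mult 2 0) by (simpl; f_equal; ring).
    apply is_lim_seq_scal_l. apply is_lim_seq_geom. rewrite Rabs_right; lra. }
  assert (Hg' : is_lim_seq (fun k => - (2 * (/16)^k)) 0).
  { pose proof (proj1 (is_lim_seq_opp _ _) Hg) as H'. simpl in H'.
    replace (-0) with 0 in H' by ring. exact H'. }
  assert (Hb : forall k, - (2 * (/16)^k) <= g n k <= 2 * (/16)^k).
  { intros k. unfold g. pose proof (pos_INR k).
    pose proof (J_bound n (8*INR k+1) Hn ltac:(lra)).
    pose proof (J_bound n (8*INR k+2) Hn ltac:(lra)).
    assert (0 < / INR (2*n) <= 1/2).
    { split. apply Rinv_0_lt_compat, lt_0_INR; lia.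
      assert (2 <= INR (2*n)) by (replace 2 with (INR 2) by (simpl; ring); apply le_INR; lia).
      apply (Rmult_le_reg_l (INR (2*n))); [lra|]. rewrite Rinv_r by lra. lra. }
    rewrite <- pow_inv.
    assert (0 < (/16)^k) by (apply pow_lt; lra). split; nra. }
  exact (is_lim_seq_le_le _ _ _ 0 Hb Hg' Hg).
Qed.

Lemma recS n : (1 <= n)%nat ->
  cn n * Sn n + cn (S n) * Sn (S n) = 16 / (2 * INR n + 1).
Proof.
  intros Hn.
  pose proof (Series_correct _ (ex_term n Hn)) as H1.
  pose proof (Series_correct _ (ex_term (S n) ltac:(lia))) as H2.
  pose proof (is_series_plus _ _ _ _ (is_series_scal_l (cn n) _ _ H1)
                (is_series_scal_l (cn (S n)) _ _ H2)) as H3.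
  pose proof (is_series_scal_l 16 _ _ (tele _ (g_lim n Hn))) as H4.
  assert (E : forall k, plus (scal (cn n) (term n k)) (scal (cn (S n)) (term (S n) k))
                = scal 16 (g n k - g n (S k))).
  { intros k. unfold plus, scal; simpl. unfold mult; simpl. unfold cn. apply tel; auto. }
  apply (is_series_ext _ _ _ E) in H3.
  assert (H5 : plus (scal (cn n) (Series (term n))) (scal (cn (S n)) (Series (term (S n))))
     = scal 16 (g n 0%nat)).
  { transitivity (Series (fun k => scal 16 (g n k - g n (S k)))).
    symmetry; apply is_series_unique; exact H3. apply is_series_unique; exact H4. }
  clear H3 H4. rename H5 into H4. unfold plus, scal in H4; simpl in H4; unfold mult in H4; simpl in H4.
  unfold Sn. rewrite H4.
  unfold g, J. replace (8 * INR 0 + 1) with 1 by (simpl; ring).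
  replace (8 * INR 0 + 2) with 2 by (simpl; ring).
  rewrite poch1, poch2, fact_simpl, mult_INR, fact_2n by auto.
  rewrite S_INR, mult_INR.
  pose proof (INR_fact_lt_0 (2*n-1)). pose proof (lt_0_INR n ltac:(lia)).
  simpl (INR 2). simpl (16 ^ 0). field. repeat split; intro; lra.
Qed.

Lemma Rtail_S n : (1 <= n)%nat -> Rtail (S n) = Rtail n - (-1)^n / (2 * INR n + 1).
Proof.
  intros Hn. unfold Rtail. destruct n as [|p]; [lia|].
  replace (S (S p) - 1)%nat with (S p) by lia. replace (S p - 1)%nat with p by lia.
  change (sum_f_R0 ?f (S p)) with (sum_f_R0 f p + f (S p)). cbv beta. ring.
Qed.

Definition D n := Rtail n - (-1)^n * cn n / 16 * Sn n.

Lemma D_S n : (1 <= n)%nat -> D (S n) = D n.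
Proof.
  intros Hn. unfold D. rewrite Rtail_S by auto.
  replace ((-1)^(S n) * cn (S n) / 16 * Sn (S n)) with (-(-1)^n/16*(cn (S n)*Sn (S n)))
    by (simpl; field).
  assert (E : cn (S n) * Sn (S n) = 16 / (2 * INR n + 1) - cn n * Sn n)
    by (rewrite <- (recS n Hn); ring).
  rewrite E. pose proof (pos_INR n). field. lra.
Qed.

Lemma D_const n : D (S n) = D 1%nat.
Proof. induction n. reflexivity. rewrite D_S by lia. exact IHn. Qed.

Lemma inv_lim : is_lim_seq (fun n => / INR (S n)) 0.
Proof.
  pose proof (is_lim_seq_inv _ _ is_lim_seq_INR ltac:(discriminate)) as H.
  simpl in H. apply (is_lim_seq_incr_1 (fun n => / INR n)). exact H.
Qed.

Lemma L2 : is_lim_seq (fun n => (-1)^(S n) * cn (S n) / 16 * Sn (S n)) 0.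
Proof.
  assert (Hb : forall n, - / INR (S n) <= (-1)^(S n) * cn (S n) / 16 * Sn (S n) <= / INR (S n)).
  { intros n.
    match goal with |- _ <= ?X <= _ => enough (HX : Rabs X <= / INR (S n))
      by (pose proof (Rle_abs X); pose proof (Rle_abs (-X)); rewrite Rabs_Ropp in *; lra) end.
    replace ((-1)^(S n) * cn (S n) / 16 * Sn (S n)) with ((-1)^(S n) / 16 * (cn (S n) * Sn (S n)))
      by (unfold Rdiv; ring).
    rewrite Rabs_mult. unfold Rdiv. rewrite Rabs_mult, pow_1_abs.
    rewrite (Rabs_right (/16)) by lra.
    pose proof (cS_bound (S n) ltac:(lia)).
    rewrite mult_INR in H. simpl (INR 2) in H.
    assert (0 < INR (S n)) by (apply lt_0_INR; lia).
    rewrite Rinv_mult in H.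
    assert (0 < / INR (S n)) by (apply Rinv_0_lt_compat; lra).
    lra. }
  pose proof inv_lim as H.
  pose proof (proj1 (is_lim_seq_opp _ _) H) as H'. simpl in H'.
  replace (-0) with 0 in H' by ring.
  exact (is_lim_seq_le_le _ _ _ 0 Hb H' H).
Qed.

Lemma L1 : is_lim_seq (fun n => Rtail (S n)) 0.
Proof.
  pose proof Alt_PI_eq as E. unfold Alt_PI in E. destruct exist_PI as [l Hl].
  apply is_lim_seq_Reals in Hl.
  assert (H : is_lim_seq (fun n => PI/4 - sum_f_R0 (tg_alt PI_tg) n) (PI/4 - l)).
  { apply is_lim_seq_minus'; auto. apply is_lim_seq_const. }
  replace (PI/4 - l) with 0 in H by lra.
  eapply is_lim_seq_ext; [|exact H]. intros n. unfold Rtail.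
  replace (S n - 1)%nat with n by lia. f_equal. apply sum_eq. intros i _.
  unfold tg_alt, PI_tg. rewrite plus_INR, mult_INR. simpl (INR 2). simpl (INR 1).
  cbv beta. unfold Rdiv. replace (1+1) with 2 by ring. reflexivity.
Qed.

Lemma D1 : D 1%nat = 0.
Proof.
  assert (H : is_lim_seq (fun n => D (S n)) (0 - 0)).
  { apply is_lim_seq_minus'. exact L1. exact L2. }
  apply (is_lim_seq_ext _ (fun _ => D 1%nat)) in H; [|intros; apply D_const].
  pose proof (is_lim_seq_unique _ _ H) as U1.
  pose proof (is_lim_seq_unique _ _ (is_lim_seq_const (D 1%nat))) as U2.
  rewrite U1 in U2. injection U2. intros. lra.
Qed.

Theorem theorem1 (n : nat) (hn : (1 <= n)%nat) :
  exists s : R,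
    is_series (term n) s /\
    Rtail n = (-1) ^ n * INR (Factorial.fact (2 * n - 1)) / 16 * s.
Proof.
  exists (Sn n). split. apply Series_correct, ex_term; auto.
  destruct n as [|p]; [lia|]. pose proof (D_const p) as E. rewrite D1 in E.
  unfold D in E. unfold cn in E. lra.
Qed.
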